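(* Let $\Lambda$ be diagonal with entries in $[0,1]$ and let $W^{(1)},W^{(2)}\ge 0$ entrywise with $W^{(1)}+W^{(2)}$ row-stochastic. Let $\bar A_d:=\begin{pmatrix}0 & I\\ \Lambda W^{(2)} & \Lambda W^{(1)}\end{pmatrix}$ and $\bar A:=\Lambda(W^{(1)}+W^{(2)})$. Then $\rho(\bar A_d)\ge\rho(\bar A)$.
   Context: $\rho$ denotes spectral radius. $\rho(\bar A_d)$ governs the convergence rate of the FJ-MM system $x(t+1)=\Lambda(W^{(1)}x(t)+W^{(2)}x(t-1))+(I-\Lambda)s$ and $\rho(\bar A)$ that of the comparison FJ system $x(t+1)=\bar A x(t)+(I-\Lambda)s$. *)

(* Defs.v *)
(* Real matrices over an arbitrary real closed field R;
   eigenvalues are taken in the algebraic closure R[i] = complex R. *)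
From HB Require Import structures.
From mathcomp Require Import all_boot all_order all_algebra.
From mathcomp Require Import complex.
Set Implicit Arguments. Unset Strict Implicit. Unset Printing Implicit Defensive.
Import Order.TTheory GRing.Theory Num.Theory.
Local Open Scope ring_scope.
Local Open Scope complex_scope.

Definition cmx (R : rcfType) (n : nat) (A : 'M[R]_n) : 'M[R[i]]_n :=
  map_mx (fun x => x%:C) A.

(* the multiset of (complex) eigenvalues of A: the roots, with multiplicity,
   of its characteristic polynomial *)
Definition eigenvalues (R : rcfType) (n : nat) (A : 'M[R]_n) : seq R[i] :=
  proj1_sig (closed_field_poly_normal (char_poly (cmx A))).

(* spectral radius rho(A) = max |lambda| over complex eigenvalues (0 if n = 0) *)
Definition spectral_radius (R : rcfType) (n : nat) (A : 'M[R]_n) : R[i] :=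
  \big[Num.max/0]_(z <- eigenvalues A) `|z|.

Definition FJMM_aug (R : rcfType) (n : nat) (L W1 W2 : 'M[R]_n) : 'M[R]_(n + n) :=
  block_mx 0 1%:M (L *m W2) (L *m W1).

(* Main.v *)
Require Import Defs.
From HB Require Import structures.
From mathcomp Require Import all_boot all_order all_algebra.
From mathcomp Require Import complex polyrcf.
From mathcomp Require Import ring lra.
From Stdlib Require Import Classical_Prop.
Import Order.TTheory GRing.Theory Num.Theory.
Local Open Scope ring_scope.
Set Implicit Arguments. Unset Strict Implicit.

Section RealPoly.
Variable R : rcfType.
Local Open Scope complex_scope.
Implicit Types p q : {poly R}.

Lemma hchar n (A : 'M[R]_n) s : (char_poly A).[s] = \det (s%:M - A).
Proof.
rewrite -horner_evalE -det_map_mx; congr (\det _).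
apply/matrixP => i j; rewrite !mxE /= horner_evalE.
by case: (i == j) => /=; rewrite !hornerE.
Qed.

Lemma monic_root_ge p x : p \is monic -> p.[x] <= 0 -> exists2 s, x <= s & root p s.
Proof.
move=> /monicP lc px.
have lc0 : 0 < lead_coef p by rewrite lc ltr01.
have [n Hn] := poly_pinfty_gt_lc lc0.
pose b := Num.max x n.
have pb : 0 < p.[b] by apply: lt_le_trans (Hn _ _); rewrite ?lc ?ltr01 // le_max lexx orbT.
have xb : x <= b by rewrite le_max lexx.
have hm : p.[x] <= 0 <= p.[b] by rewrite px ltW.
have [s] := poly_ivt xb hm.
by move=> /andP[xs _] rs; exists s.
Qed.

Lemma poly_right_ge0 q x : (forall y, x < y -> 0 <= q.[y]) -> 0 <= q.[x].
Proof.
move=> H; rewrite leNgt; apply/negP => qx.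
have e0 : 0 < - q.[x] by rewrite oppr_gt0.
have [d d0 Hd] := poly_cont x q e0.
have := Hd (x + d / 2%:R).
rewrite addrAC subrr add0r ger0_norm ?divr_ge0 ?ltW // ltr_pdivrMr ?ltr0n //.
rewrite ltr_pMr // ltr1n => /(_ isT) Hlt.
have := H (x + d / 2%:R); rewrite ltrDl divr_gt0 ?ltr0n // => /(_ isT) hy.
move: (le_lt_trans (ler_norm _) Hlt); rewrite ltrBlDr addNr.
by rewrite ltNge hy.
Qed.

Lemma largest_root p t s0 : p != 0 -> t <= s0 -> root p s0 ->
  exists s1, [/\ t <= s1, root p s1 & forall s, s1 < s -> ~~ root p s].
Proof.
move=> p0 ts0 rs0.
have s0b : s0 < cauchy_bound p.
  rewrite ltNge; apply/negP => hb.
  by move: (ge_cauchy_bound p0 (x:=s0)); rewrite in_itv /= hb rs0 => /(_ isT).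
case: (prev_rootP p (s0 - 1) (cauchy_bound p)).
- by move=> p00; rewrite p00 eqxx in p0.
- move=> y _ py0 hy hno; exists y; split.
  + apply: le_trans ts0 _; rewrite leNgt; apply/negP => ys0.
    by move: (hno s0); rewrite in_itv /= ys0 s0b rs0 => /(_ isT).
  + by apply/rootP.
  + move=> s ys; case: (ltP s (cauchy_bound p)) => hs.
      by apply: hno; rewrite in_itv /= ys hs.
    by apply: (ge_cauchy_bound p0); rewrite in_itv /= hs.
- move=> c _ _ hno; move: (hno s0); rewrite in_itv /= s0b gtrBl ltr01 rs0.
  by move=> /(_ isT).
Qed.


Definition nnmx {m n} (A : 'M[R]_(m,n)) := forall i j, 0 <= A i j.

Lemma nnmx_mul m n l (A : 'M[R]_(m,n)) (B : 'M[R]_(n,l)) :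
  nnmx A -> nnmx B -> nnmx (A *m B).
Proof. by move=> hA hB i j; rewrite mxE sumr_ge0 // => k _; rewrite mulr_ge0. Qed.

Lemma nnmx_add m n (A B : 'M[R]_(m,n)) : nnmx A -> nnmx B -> nnmx (A + B).
Proof. by move=> hA hB i j; rewrite mxE addr_ge0. Qed.

Lemma nnmx_scalar n (a : R) : 0 <= a -> nnmx (a%:M : 'M_n).
Proof. by move=> ha i j; rewrite mxE; case: (i == j). Qed.

Lemma nnmx0 m n : nnmx (0 : 'M[R]_(m,n)).
Proof. by move=> i j; rewrite mxE. Qed.

Lemma nnmx_block m1 m2 n1 n2 (A : 'M[R]_(m1,n1)) (B : 'M_(m1,n2))
   (C : 'M_(m2,n1)) (D : 'M_(m2,n2)) :
  nnmx A -> nnmx B -> nnmx C -> nnmx D -> nnmx (block_mx A B C D).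
Proof.
move=> hA hB hC hD i j.
case: (split_ordP i) => i' ->; case: (split_ordP j) => j' ->.
- by rewrite block_mxEul.
- by rewrite block_mxEur.
- by rewrite block_mxEdl.
- by rewrite block_mxEdr.
Qed.

Lemma det_schur N (a : 'M[R]_1) (u : 'M_(1,N)) (v : 'M_(N,1)) (M Mi : 'M_N) :
  M *m Mi = 1%:M -> \det (block_mx a u v M) = \det M * (a - u *m Mi *m v) 0 0.
Proof.
move=> hM; have hM' := mulmx1C hM.
have -> : block_mx a u v M = block_mx 1%:M (u *m Mi) 0 1%:M *m
            block_mx (a - u *m Mi *m v) 0 v M.
  rewrite mulmx_block !mul1mx !mul0mx !add0r.
  by rewrite subrK -mulmxA hM' mulmx1.
by rewrite det_mulmx det_ublock det_lblock !det1 !mul1r det_mx11 mulrC.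
Qed.

Lemma block_inv N (al : 'M[R]_1) (u : 'M_(1,N)) (v : 'M_(N,1)) (M Mi : 'M_N) :
  M *m Mi = 1%:M -> (al - u *m Mi *m v) 0 0 != 0 ->
  let S := ((al - u *m Mi *m v) 0 0)^-1%:M in
  block_mx al u v M *m
    block_mx S (- (S *m u *m Mi)) (- (Mi *m v *m S)) (Mi + Mi *m v *m S *m u *m Mi)
  = 1%:M.
Proof.
move=> hM hs S.
set sg := al - u *m Mi *m v.
have sS : sg *m S = 1%:M.
  by rewrite [sg]mx11_scalar /S mul_scalar_mx scale_scalar_mx mulfV.
have eal : al = sg + u *m Mi *m v by rewrite /sg subrK.
rewrite [1%:M as X in _ = X]scalar_mx_block mulmx_block.
congr block_mx.
- by rewrite mulmxN eal mulmxDl sS !mulmxA addrK.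
- rewrite mulmxN mulmxDr eal mulmxDl. rewrite !mulmxA. by rewrite sS mul1mx addNr.
- by rewrite (mulmxN M) !mulmxA hM mul1mx subrr.
- rewrite (mulmxN v) mulmxDr !mulmxA hM !mul1mx.
  by rewrite addrC -addrA -!mulmxA addrN addr0.
Qed.



Lemma blockB N (B : 'M[R]_(1 + N)) t :
  t%:M - B = block_mx (t%:M - ulsubmx B) (- ursubmx B) (- dlsubmx B) (t%:M - drsubmx B).
Proof.
by rewrite -{1}[B]submxK (scalar_mx_block 1 N t) opp_block_mx add_block_mx !add0r.
Qed.

Lemma nn_sub m1 m2 n1 n2 (B : 'M[R]_(m1 + m2, n1 + n2)) : nnmx B ->
  [/\ nnmx (ulsubmx B), nnmx (ursubmx B), nnmx (dlsubmx B) & nnmx (drsubmx B)].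
Proof. by move=> hB; split => i j; rewrite !mxE; apply: hB. Qed.

Lemma step_char N (B : 'M[R]_(1 + N)) s :
  (forall (B' : 'M[R]_N) t, nnmx B' -> (forall s, t <= s -> ~~ root (char_poly B') s) ->
      exists X, nnmx X /\ (t%:M - B') *m X = 1%:M) ->
  nnmx B -> (forall s', s <= s' -> ~~ root (char_poly (drsubmx B)) s') ->
  exists Mi, [/\ nnmx Mi, (s%:M - drsubmx B) *m Mi = 1%:M &
    (char_poly B).[s] = (char_poly (drsubmx B)).[s] *
        (s - ulsubmx B 0 0 - (ursubmx B *m Mi *m dlsubmx B) 0 0)].
Proof.
move=> IH hB hno; have [_ _ _ hB'] := @nn_sub 1 N 1 N B hB.
have [Mi [hMi eMi]] := IH _ _ hB' hno.
exists Mi; split => //.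
rewrite !hchar blockB (@det_schur N _ _ _ _ _ eMi).
by rewrite (mulmxN (- ursubmx B *m Mi)) mulNmx mulNmx opprK !mxE eqxx mulr1n.
Qed.


Lemma negneg1 m n l k (S : 'M[R]_(m,n)) (c : 'M_(n,l)) (Mi : 'M_(l,k)) :
  - (S *m - c *m Mi) = S *m c *m Mi.
Proof. by rewrite mulmxN mulNmx opprK. Qed.

Lemma negneg2 m n l k j h (A : 'M[R]_(m,n)) (B : 'M_(n,l)) (C : 'M_(l,k))
   (D : 'M_(k,j)) (E : 'M_(j,h)) :
  A *m - B *m C *m - D *m E = A *m B *m C *m D *m E.
Proof. by rewrite mulmxN !mulNmx mulmxN !mulNmx opprK. Qed.

Lemma pos_of (p : {poly R}) x : p \is monic -> (forall s, x <= s -> ~~ root p s) -> 0 < p.[x].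
Proof.
move=> mp hp; rewrite ltNge; apply/negP => px.
by have [s xs rs] := monic_root_ge mp px; move: (hp s xs); rewrite rs.
Qed.

Lemma mmat N : forall (B : 'M[R]_N) t, nnmx B ->
  (forall s, t <= s -> ~~ root (char_poly B) s) ->
  exists X, nnmx X /\ (t%:M - B) *m X = 1%:M.
Proof.
elim: N => [|N IH] B t hB hno.
  exists 0; split; first exact: nnmx0.
  by apply/matrixP => -[].
move: B hB hno; rewrite -[N.+1]/(1 + N)%N => B hB hno.
have [ha hc hd hB'] := @nn_sub 1 N 1 N B hB.
have mon' : char_poly (drsubmx B) \is monic := char_poly_monic _.
have hno' : forall s, t <= s -> ~~ root (char_poly (drsubmx B)) s.
  move=> s0 ts0; apply/negP => r0.
  have [s1 [ts1 r1 hmax]] := largest_root (monic_neq0 mon') ts0 r0.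
  pose q := ('X - (ulsubmx B 0 0)%:P) * char_poly (drsubmx B) - char_poly B.
  have hq : forall y, s1 < y -> 0 <= q.[y].
    move=> y s1y.
    have hnoy : forall s', y <= s' -> ~~ root (char_poly (drsubmx B)) s'.
      by move=> s' ys'; apply: hmax; exact: lt_le_trans s1y ys'.
    have [Mi [hMi _ eq]] := step_char IH hB hnoy.
    have py := pos_of mon' hnoy.
    rewrite /q hornerD hornerN hornerM eq !hornerE.
    set k := (_ *m _ *m _) 0 0.
    have -> : (y - ulsubmx B 0 0) * (char_poly (drsubmx B)).[y] -
       (char_poly (drsubmx B)).[y] * (y - ulsubmx B 0 0 - k) =
       (char_poly (drsubmx B)).[y] * k by ring.
    apply: mulr_ge0; first exact: ltW.
    exact: (nnmx_mul (nnmx_mul hc hMi) hd).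
  have := poly_right_ge0 hq.
  rewrite /q hornerD hornerN hornerM (rootP r1) mulr0 sub0r oppr_ge0 => hB0.
  have [s2 s12 r2] := monic_root_ge (char_poly_monic B) hB0.
  by move: (hno s2 (le_trans ts1 s12)); rewrite r2.
have [Mi [hMi eMi eq]] := step_char IH hB hno'.
have p' := pos_of mon' hno'.
have p := pos_of (char_poly_monic B) hno.
rewrite eq pmulr_rgt0 // in p.
set sg := t - _ - _ in p.
have esg : ((t%:M - ulsubmx B) - (- ursubmx B) *m Mi *m (- dlsubmx B)) 0 0 = sg.
  by rewrite (mulmxN (- ursubmx B *m Mi)) !mulNmx !opprK /sg !mxE eqxx mulr1n.
have hs : ((t%:M - ulsubmx B) - (- ursubmx B) *m Mi *m (- dlsubmx B)) 0 0 != 0.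
  by rewrite esg gt_eqF.
have hinv := block_inv eMi hs.
rewrite /= esg in hinv.
eexists; split; last by rewrite blockB; exact: hinv.
have hS : nnmx (sg^-1%:M : 'M_1) by apply: nnmx_scalar; rewrite ltW // invr_gt0.
apply: nnmx_block => //.
- by rewrite negneg1; apply: nnmx_mul => //; apply: nnmx_mul.
- by rewrite negneg1; apply: nnmx_mul => //; apply: nnmx_mul.
- rewrite negneg2; apply: nnmx_add => //.
  by do 4! apply: nnmx_mul => //.
Qed.


Lemma cw N (B : 'M[R]_N) (y : 'cV[R]_N) mu : nnmx B -> nnmx y -> y != 0 ->
  (forall i, mu * y i 0 <= (B *m y) i 0) -> exists2 s, mu <= s & root (char_poly B) s.
Proof.
move=> hB hy y0 hmu.
case: (Classical_Prop.classic (exists2 s, mu <= s & root (char_poly B) s)) => // hn.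
have hno : forall s, mu <= s -> ~~ root (char_poly B) s.
  by move=> s ms; apply/negP => rs; apply: hn; exists s.
have [X [hX eX]] := mmat hB hno.
have eX' := mulmx1C eX.
have ey : y = X *m ((mu%:M - B) *m y) by rewrite mulmxA eX' mul1mx.
case/eqP: y0; apply/matrixP => i j; rewrite [j]ord1 mxE.
apply/eqP; rewrite eq_le hy andbT.
rewrite ey mxE; apply: sumr_le0 => k _.
apply: mulr_ge0_le0 => //.
move: (hmu k); rewrite mulmxBl mul_scalar_mx !mxE => h; lra.
Qed.


Definition nr (z : R[i]) : R := complex.Re `|z|.

Lemma normE (z : R[i]) : `|z| = (nr z)%:C.
Proof. by rewrite /nr normc_def. Qed.

Lemma lecR (a b : R) : (a%:C <= b%:C) = (a <= b).
Proof. by rewrite lecE /= eqxx. Qed.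

Lemma C0 : (0 : R)%:C = 0.
Proof. by []. Qed.

Lemma nr_ge0 z : 0 <= nr z.
Proof. by have := normr_ge0 z; rewrite normE -C0 lecR. Qed.

Lemma nr_real (a : R) : 0 <= a -> nr a%:C = a.
Proof. by move=> ha; rewrite /nr ger0_norm // -C0 lecR. Qed.

Lemma maxC (a b : R) : Num.max a%:C b%:C = (Num.max a b)%:C.
Proof. by rewrite /Num.max ltcE /= eqxx /=; case: (ltP a b) => h; rewrite ?max_r ?max_l // ltW. Qed.

Lemma rho_eq (s : seq R[i]) :
  \big[Num.max/0]_(z <- s) `|z| = (\big[Num.max/0]_(z <- s) nr z)%:C.
Proof.
elim: s => [|x s IH]; first by rewrite !big_nil.
by rewrite !big_cons IH normE maxC.
Qed.

Lemma le_bigmaxR (s : seq R[i]) x : x \in s -> nr x <= \big[Num.max/0]_(z <- s) nr z.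
Proof.
elim: s => [|y s IH] //; rewrite in_cons big_cons => /orP[/eqP->|hx].
  by rewrite le_max lexx.
by rewrite le_max IH // orbT.
Qed.

Lemma bigmaxR_le (s : seq R[i]) c : 0 <= c -> (forall x, x \in s -> nr x <= c) ->
  \big[Num.max/0]_(z <- s) nr z <= c.
Proof.
move=> c0; elim: s => [|y s IH] hs; first by rewrite big_nil.
rewrite big_cons ge_max hs ?mem_head // IH // => x hx.
by apply: hs; rewrite in_cons hx orbT.
Qed.

Lemma eig_root n (A : 'M[R]_n) z : (z \in eigenvalues A) = root (char_poly (cmx A)) z.
Proof.
rewrite /eigenvalues; case: closed_field_poly_normal => r /= e.
by rewrite {1}e (monicP (char_poly_monic _)) scale1r root_prod_XsubC.
Qed.

Lemma char_cmx n (A : 'M[R]_n) :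
  char_poly (cmx A) = map_poly (real_complex R) (char_poly A).
Proof. by rewrite map_char_poly. Qed.

Lemma real_eig n (A : 'M[R]_n) s : root (char_poly A) s -> s%:C \in eigenvalues A.
Proof.
by rewrite eig_root char_cmx => /rootP h; apply/rootP; rewrite horner_map h.
Qed.

Lemma char_tr n (A : 'M[R[i]]_n) : char_poly A^T = char_poly A.
Proof.
rewrite /char_poly -det_tr; congr (\det _).
by apply/matrixP => i j; rewrite !mxE eq_sym.
Qed.

Lemma eig_vec n (A : 'M[R]_n) w : nnmx A -> w \in eigenvalues A ->
  exists y : 'cV[R]_n, [/\ nnmx y, y != 0 & forall i, nr w * y i 0 <= (A *m y) i 0].
Proof.
move=> hA; rewrite eig_root -char_tr -eigenvalue_root_char => /eigenvalueP[v hv v0].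
exists (\col_i nr (v 0 i)); split.
- by move=> i j; rewrite mxE nr_ge0.
- apply: contra v0 => /eqP y0; apply/eqP/matrixP => k j; rewrite [k]ord1 mxE.
  have := congr1 (fun M : 'M[R]_(n,1) => M j 0) y0; rewrite !mxE => h.
  by apply/eqP; rewrite -normr_eq0 normE h.
- move=> i; have := congr1 (fun M : 'M[R[i]]_(1,n) => M 0 i) hv; rewrite !mxE => ev.
  rewrite -lecR rmorphM rmorph_sum /= -!normE -normrM -ev.
  apply: le_trans (ler_norm_sum _ _ _) _; apply: ler_sum => j _.
  rewrite !mxE normrM rmorphM /= -normE mulrC ger0_norm //.
  by rewrite -C0 lecR.
Qed.


Lemma bigmaxR_ge0 (s : seq R[i]) : 0 <= \big[Num.max/0]_(z <- s) nr z.
Proof. by elim: s => [|y s IH]; rewrite ?big_nil ?big_cons // le_max IH orbT. Qed.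

End RealPoly.

Theorem proposition2 (R : rcfType) (n : nat) (L W1 W2 : 'M[R]_n) :
  is_diag_mx L ->
  (forall i, 0 <= L i i <= 1) ->
  (forall i j, 0 <= W1 i j) ->
  (forall i j, 0 <= W2 i j) ->
  (forall i, \sum_j (W1 + W2) i j = 1) ->
  spectral_radius (L *m (W1 + W2)) <= spectral_radius (FJMM_aug L W1 W2).
Proof.
move=> hL hL01 h1 h2 hrow.
have hLn : nnmx L.
  move=> i j; case: (eqVneq i j) => [->|ij]; first by case/andP: (hL01 j).
  by rewrite (is_diag_mxP hL).
have LM : forall m (M : 'M[R]_(n,m)) i j, (L *m M) i j = L i i * M i j.
  move=> m M i j; rewrite mxE (bigD1 i) //= big1 ?addr0 // => k ki.
  by rewrite (is_diag_mxP hL) ?mul0r // eq_sym.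
have hA : nnmx (L *m (W1 + W2)) by apply: nnmx_mul => //; apply: nnmx_add.
have hAd : nnmx (FJMM_aug L W1 W2).
  apply: nnmx_block; [exact: nnmx0 | exact: nnmx_scalar ler01 | exact: nnmx_mul | exact: nnmx_mul].
rewrite /spectral_radius !rho_eq lecR.
apply: bigmaxR_le; first exact: bigmaxR_ge0.
move=> w hw.
have [y [hy y0 hmu]] := eig_vec hA hw.
set mu := nr w in hmu *.
have mu0 : 0 <= mu := nr_ge0 w.
have [i0 hi0] : exists i, y i 0 != 0.
  case/boolP: [exists i, y i 0 != 0] => [/existsP[i0 hi0]|/existsPn hall]; first by exists i0.
  case/eqP: y0; apply/matrixP => i j; rewrite [j]ord1 mxE.
  by have := hall i; rewrite negbK => /eqP->.
have yi0 : 0 < y i0 0 by rewrite lt_def hi0 hy.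
have [k _ hk] := @arg_maxP _ _ _ i0 xpredT (fun i => y i 0) isT.
have yk : 0 < y k 0 by apply: lt_le_trans yi0 (hk i0 isT).
have mu1 : mu <= 1.
  have hb : (L *m (W1 + W2) *m y) k 0 <= y k 0.
    rewrite mxE; apply: (@le_trans _ _ (\sum_j L k k * (W1 + W2) k j * y k 0)).
      apply: ler_sum => j _; rewrite LM; apply: ler_wpM2l; last exact: (hk j isT).
      by apply: mulr_ge0; [case/andP: (hL01 k) | rewrite mxE addr_ge0].
    rewrite -mulr_suml -mulr_sumr hrow mulr1.
    by case/andP: (hL01 k) => _ hk1; rewrite ler_piMl // ltW.
  have := le_trans (hmu k) hb => hh; nra.
pose z := col_mx y (mu *: y).
have hz : nnmx z.
  move=> i j; rewrite [j]ord1; case: (split_ordP i) => i' ->.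
    by rewrite col_mxEu.
  by rewrite col_mxEd mxE mulr_ge0.
have z0 : z != 0.
  apply: contra y0 => /eqP zz; apply/eqP/matrixP => i j.
  have := congr1 (fun M : 'M[R]_(n + n, 1) => M (lshift n i) j) zz.
  by rewrite col_mxEu !mxE.
have hz2 : forall i, mu * z i 0 <= (FJMM_aug L W1 W2 *m z) i 0.
  move=> i; rewrite /FJMM_aug mul_block_col; case: (split_ordP i) => i' ->.
    by rewrite !col_mxEu mul0mx add0r mul1mx mxE.
  rewrite !col_mxEd -scalemxAr !mxE.
  have := hmu i'; rewrite mulmxDr mulmxDl !mxE => hh.
  have X1 := nnmx_mul (nnmx_mul hLn h1) hy i' 0.
  have X2 := nnmx_mul (nnmx_mul hLn h2) hy i' 0.
  rewrite mxE in X1; rewrite mxE in X2. nra.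
have [s ms rs] := cw hAd hz z0 hz2.
apply: (le_trans ms); rewrite -{1}(nr_real (le_trans mu0 ms)).
by apply: le_bigmaxR; apply: real_eig.
Qed.
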